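(* Let $m,n\geq 2$ and let $V$ be the vertex set of $K_m\Box K_n$. If $S$ is a $\{2\}$-resolving set of $K_m\Box K_n$, then (1) there is a vertex $v\in V$ such that $\{v\}\cup(V\setminus N(v))\subseteq S$, or (2) every row and every column of $K_m\Box K_n$ contains at least two elements of $S$ and every quadruple contains at least one element of $S$.
   Context: $K_m\Box K_n$ has vertices $av$ with $a\in V(K_m)$, $v\in V(K_n)$; distinct $av,bu$ are adjacent iff $a=b$ or $u=v$. A column is a set $\{au: u\in V(K_n)\}$ for fixed $a\in V(K_m)$; a row is a set $\{au: a\in V(K_m)\}$ for fixed $u\in V(K_n)$. A quadruple is a set $\{av,au,bv,bu\}$ with $a\neq b$, $u\neq v$. $N(v)$ is the set of neighbours of $v$. $d$ is the shortest-path distance, $d(s,X)=\min_{x\in X}d(s,x)$, $\mathcal{D}_S(X)=(d(s_1,X),\dots,d(s_k,X))$ for $S=\{s_1,\dots,s_k\}$. $S$ is a $\{2\}$-resolving set if $\mathcal{D}_S(X)\neq\mathcal{D}_S(Y)$ for all distinct nonempty vertex sets $X,Y$ with $|X|,|Y|\leq 2$. *)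

(* Defs.v *)
From mathcomp Require Import all_boot.
Set Implicit Arguments. Unset Strict Implicit. Unset Printing Implicit Defensive.

Section Graph.
Variables (T : finType) (e : rel T).

Fixpoint ball (k : nat) (x : T) : {set T} :=
  match k with
  | 0 => [set x]
  | k'.+1 => ball k' x :|: [set z | [exists w in ball k' x, e w z]]
  end.

(* shortest-path distance; (= #|T| if y is unreachable from x) *)
Definition gdist (x y : T) : nat :=
  find (fun k => y \in ball k x) (iota 0 #|T|).

Definition gdist_set (s : T) (X : {set T}) : nat :=
  \big[minn/#|T|]_(x in X) gdist s x.

Definition nbhd (v : T) : {set T} := [set w | e v w].

Definition two_resolving (S : {set T}) : Prop :=
  forall X Y : {set T}, X != set0 -> Y != set0 ->
    #|X| <= 2 -> #|Y| <= 2 -> X != Y ->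
    exists2 s, s \in S & gdist_set s X != gdist_set s Y.
End Graph.

(* The Cartesian product K_m [] K_n on 'I_m * 'I_n *)
Definition rook_adj (m n : nat) : rel ('I_m * 'I_n) :=
  fun x y => (x != y) && ((x.1 == y.1) || (x.2 == y.2)).

Definition column (m n : nat) (a : 'I_m) : {set 'I_m * 'I_n} :=
  [set x | x.1 == a].
Definition row (m n : nat) (u : 'I_n) : {set 'I_m * 'I_n} :=
  [set x | x.2 == u].
Definition quadruple (m n : nat) (a b : 'I_m) (u v : 'I_n) : {set 'I_m * 'I_n} :=
  [set (a, v); (a, u); (b, v); (b, u)].

(* Main.v *)
From HB Require Import structures.
Require Import Defs.
From mathcomp Require Import all_boot.
Set Implicit Arguments. Unset Strict Implicit. Unset Printing Implicit Defensive.

HB.instance Definition _ := SemiGroup.isComLaw.Build nat minn minnA minnC.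

Section R.
Variables (m n : nat).
Hypotheses (hm : 2 <= m) (hn : 2 <= n).
Local Notation T := ('I_m * 'I_n)%type.

Definition dd (x y : T) : nat := (x.1 != y.1) + (x.2 != y.2).

Lemma dd_le2 x y : dd x y <= 2.
Proof. by rewrite /dd; case: (_ != _); case: (_ != _). Qed.

Lemma adj_dd x y : rook_adj x y = (dd x y == 1).
Proof.
case: x y => x1 x2 [y1 y2]; rewrite /rook_adj /dd /= xpair_eqE.
by case: (x1 == y1); case: (x2 == y2).
Qed.

Lemma neq_tri (U : eqType) (p q r : U) : (p != r) <= (p != q) + (q != r).
Proof. by case: (eqVneq p q) => [->|]; [|case: (_ != r); case: (p != r)]. Qed.

Lemma dd_tri x y z : dd x z <= dd x y + dd y z.
Proof. by rewrite /dd addnACA; apply: leq_add; apply: neq_tri. Qed.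

Lemma ball_dd k x y : (y \in ball (@rook_adj m n) k x) = (dd x y <= k).
Proof.
elim: k y => [|k IH] y /=.
  rewrite inE leqn0 /dd; case: x y => x1 x2 [y1 y2] /=; rewrite xpair_eqE.
  by rewrite (eq_sym y1) (eq_sym y2); case: (x1 == y1); case: (x2 == y2).
rewrite !inE IH; apply/idP/idP.
  case/orP => [H|/existsP [w /andP [Hw Hwy]]]; first exact: leqW.
  rewrite IH in Hw; rewrite adj_dd in Hwy.
  apply: leq_trans (dd_tri x w y) _; rewrite (eqP Hwy) addn1; exact: Hw.
move=> H; case: (leqP (dd x y) k) => Hk; first by [].
have Hd : dd x y = k.+1 by apply/eqP; rewrite eqn_leq H Hk.
apply/orP; right; apply/existsP.
have := dd_le2 x y; rewrite Hd.
case: k {H Hk} IH Hd => [|[|k]] IH Hd // _.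
  by exists x; rewrite IH /dd !eqxx /= adj_dd Hd.
exists (x.1, y.2); rewrite IH adj_dd.
move: Hd; rewrite /dd /=; case: (x.1 != y.1); case: (x.2 != y.2) => //= _.
by rewrite !eqxx.
Qed.

Lemma cardT_ge3 : 3 <= #|{: T}|.
Proof.
rewrite card_prod !card_ord.
exact: leq_trans _ (leq_mul hm hn).
Qed.

Lemma gdist_dd x y : gdist (@rook_adj m n) x y = dd x y.
Proof.
rewrite /gdist (eq_find (a2 := fun k => dd x y <= k)); last by move=> k; rewrite ball_dd.
have := cardT_ge3; rewrite -(subnK cardT_ge3) addn3 => _.
have := dd_le2 x y; rewrite /=.
by case: (dd x y) => [|[|[|]]].
Qed.

Lemma gds2 s p q : gdist_set (@rook_adj m n) s [set p; q] = minn (dd s p) (dd s q).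
Proof.
rewrite /gdist_set.
have Hl r : minn (dd s r) #|{: T}| = dd s r.
  by apply/minn_idPl; apply: leq_trans (dd_le2 s r) (ltnW cardT_ge3).
case: (eqVneq p q) => [<-|pq].
  by rewrite setUid big_set1E gdist_dd Hl minnn.
rewrite (bigD1 p) ?inE ?eqxx //= (eq_bigl (fun i => i \in [set q])); last first.
  move=> i /=; rewrite !inE; case: (eqVneq i p) => [->|] /=; last by rewrite andbT.
  by rewrite (negPf pq).
by rewrite big_set1E !gdist_dd Hl.
Qed.


Lemma neq2 (U : eqType) (a b c : U) : a != b -> ~~ ((c == a) && (c == b)).
Proof. by move=> ab; apply/andP => [[/eqP -> /eqP E]]; rewrite E eqxx in ab. Qed.

Lemma setneq (U : finType) (A B : {set U}) y : y \in B -> y \notin A -> A != B.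
Proof. by move=> yB yA; apply/eqP => E; rewrite E yB in yA. Qed.

Variable S : {set T}.
Hypothesis HS : two_resolving (@rook_adj m n) S.

Lemma use2 p q p' q' : [set p; q] != [set p'; q'] ->
  exists2 s, s \in S & minn (dd s p) (dd s q) != minn (dd s p') (dd s q').
Proof.
move=> ne.
have ne0 (x y : T) : [set x; y] != set0 by apply/set0Pn; exists x; rewrite !inE eqxx.
have c2 (x y : T) : #|[set x; y]| <= 2 by rewrite cards2; case: (_ != _).
have [s Hs H] := HS (ne0 p q) (ne0 p' q') (c2 p q) (c2 p' q') ne.
by exists s => //; rewrite !gds2 in H.
Qed.

Lemma sep_row (a b : 'I_m) (u w : 'I_n) : a != b -> u != w ->
  exists2 s, s \in S & ((s.1 == b) && (s.2 == w)) || ((s.2 == u) && (s.1 != a)).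
Proof.
move=> ab uw.
have [|[c t] Hs H] := @use2 (a, w) (b, w) (a, w) (b, u).
  by apply: (@setneq _ _ _ (b, u)); rewrite !inE ?eqxx // !xpair_eqE (negPf uw) !andbF.
exists (c, t) => //=; rewrite /dd /= in H.
move: (neq2 c ab) (neq2 t uw) H.
by case: (c == a); case: (c == b); case: (t == u); case: (t == w).
Qed.

Lemma lineA_row (a : 'I_m) (u w : 'I_n) : u != w -> exists2 s, s \in S & s.2 == u.
Proof.
move=> uw.
have [|[c t] Hs H] := @use2 (a, w) (a, w) (a, w) (a, u).
  by apply: (@setneq _ _ _ (a, u)); rewrite !inE ?eqxx ?orbT // !xpair_eqE (negPf uw) !andbF.
exists (c, t) => //=; rewrite /dd /= in H.
move: (neq2 t uw) H.
by case: (c == a); case: (t == u); case: (t == w).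
Qed.

Lemma sep_col (c0 c : 'I_m) (r0 r : 'I_n) : c0 != c -> r0 != r ->
  exists2 s, s \in S & ((s.1 == c) && (s.2 == r)) || ((s.1 == c0) && (s.2 != r0)).
Proof.
move=> ab uw.
have [|[x t] Hs H] := @use2 (c, r0) (c, r) (c, r0) (c0, r).
  by apply: (@setneq _ _ _ (c0, r)); rewrite !inE ?eqxx ?orbT // !xpair_eqE (negPf ab) !andFb.
exists (x, t) => //=; rewrite /dd /= in H.
move: (neq2 x ab) (neq2 t uw) H.
by case: (x == c0); case: (x == c); case: (t == r0); case: (t == r).
Qed.

Lemma lineA_col (a b : 'I_m) (u : 'I_n) : a != b -> exists2 s, s \in S & s.1 == a.
Proof.
move=> ab.
have [|[c t] Hs H] := @use2 (b, u) (b, u) (b, u) (a, u).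
  by apply: (@setneq _ _ _ (a, u)); rewrite !inE ?eqxx ?orbT // !xpair_eqE (negPf ab) !andFb.
exists (c, t) => //=; rewrite /dd /= in H.
move: (neq2 c ab) H.
by case: (c == a); case: (c == b); case: (t == u).
Qed.

Lemma sep_quad (a b : 'I_m) (u v : 'I_n) : a != b -> u != v ->
  exists2 s, s \in S & ((s.1 == a) || (s.1 == b)) && ((s.2 == u) || (s.2 == v)).
Proof.
move=> ab uv.
have [|[c t] Hs H] := @use2 (a, v) (b, u) (a, u) (b, v).
  by apply: (@setneq _ _ _ (a, u)); rewrite !inE ?eqxx ?orbT // !xpair_eqE (negPf ab) (negPf uv) !andbF.
exists (c, t) => //=; rewrite /dd /= in H.
move: (neq2 c ab) (neq2 t uv) H.
by case: (c == a); case: (c == b); case: (t == u); case: (t == v).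
Qed.

End R.

Lemma other k (x : 'I_k) : 1 < k -> exists y : 'I_k, x != y.
Proof.
move=> hk.
pose y0 : 'I_k := Ordinal (ltnW hk); pose y1 : 'I_k := Ordinal hk.
case: (eqVneq x y0) => [->|ne]; last by exists y0.
by exists y1; apply/eqP => /(congr1 val).
Qed.

Unset Implicit Arguments.
Theorem mainTheorem11 (m n : nat) (S : {set 'I_m * 'I_n}) :
  2 <= m -> 2 <= n ->
  two_resolving (@rook_adj m n) S ->
  (exists v : 'I_m * 'I_n,
      [set v] :|: ~: nbhd (@rook_adj m n) v \subset S)
  \/
  ((forall u : 'I_n, 2 <= #|row m u :&: S|) /\
   (forall a : 'I_m, 2 <= #|column n a :&: S|) /\
   (forall (a b : 'I_m) (u v : 'I_n), a != b -> u != v ->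
      quadruple a b u v :&: S != set0)).
Proof.
move=> hm hn HS.
pose a0 : 'I_m := Ordinal (ltnW hm); pose u0 : 'I_n := Ordinal (ltnW hn).
case: (boolP [exists u, #|row m u :&: S| < 2]) => [/existsP [u Hu] | Hrow].
  left.
  have [w uw] := other u hn.
  have [[a u'] s0S /= /eqP Eu] := lineA_row hm hn HS a0 uw; subst u'.
  have uniq0 s : s \in S -> s.2 == u -> s = (a, u).
    move=> sS su; apply/eqP; apply: contraLR Hu => ne; rewrite -leqNgt.
    apply/card_gt1P; exists s, (a, u); split => //; rewrite !inE ?sS ?s0S ?andbT //.
  exists (a, u); apply/subsetP => -[b w'] ; rewrite !inE /rook_adj /= xpair_eqE.
  case: (eqVneq (b, w') (a, u)) => [[-> ->] //|]; rewrite xpair_eqE => ne /=.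
  case/orP => [H|]; first by rewrite H in ne.
  rewrite negb_or => /andP [ba w'u].
  have [s sS /orP [/andP [/eqP E1 /eqP E2]|/andP [su sa]]] := sep_row hm hn HS ba w'u.
  - by move: sS; case: s E1 E2 => /= ? ? -> ->.
  - by move: sa; rewrite (uniq0 s sS su) eqxx.
case: (boolP [exists a, #|column n a :&: S| < 2]) => [/existsP [a Ha] | Hcol].
  left.
  have [b ab] := other a hm.
  have [[a' u] s0S /= /eqP Ea] := lineA_col hm hn HS u0 ab; subst a'.
  have uniq0 s : s \in S -> s.1 == a -> s = (a, u).
    move=> sS sa; apply/eqP; apply: contraLR Ha => ne; rewrite -leqNgt.
    apply/card_gt1P; exists s, (a, u); split => //; rewrite !inE ?sS ?s0S ?andbT //.
  exists (a, u); apply/subsetP => -[c w'] ; rewrite !inE /rook_adj /= xpair_eqE.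
  case: (eqVneq (c, w') (a, u)) => [[-> ->] //|]; rewrite xpair_eqE => ne /=.
  case/orP => [H|]; first by rewrite H in ne.
  rewrite negb_or => /andP [ca w'u].
  have [s sS /orP [/andP [/eqP E1 /eqP E2]|/andP [sa su]]] := sep_col hm hn HS ca w'u.
  - by move: sS; case: s E1 E2 => /= ? ? -> ->.
  - by move: su; rewrite (uniq0 s sS sa) eqxx.
right; split; [|split].
- by move=> u; move/existsPn: Hrow => /(_ u); rewrite -leqNgt.
- by move=> a; move/existsPn: Hcol => /(_ a); rewrite -leqNgt.
- move=> a b u v ab uv.
  have [s sS H] := sep_quad hm hn HS ab uv.
  apply/set0Pn; exists s; rewrite !inE sS andbT.
  case: s {sS} H => c t /= /andP [/orP [] /eqP -> /orP [] /eqP ->]; rewrite !eqxx ?orbT //.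
Qed.
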